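(* Let $n\ge1$, $p\in\,]1,2[$, $k_3>0$, and define $\phi_1,\phi_2:\mathbb{R}^n\to\mathbb{R}^n$ by $$\phi_1(e_1)=k_3e_1+(e_1^\top e_1)^{\frac{1-p}{3p-2}}e_1,$$ $$\phi_2(e_1)=k_3^2e_1+\frac{2k_3(2p-1)}{3p-2}(e_1^\top e_1)^{\frac{1-p}{3p-2}}e_1+\frac{p}{3p-2}(e_1^\top e_1)^{\frac{2(1-p)}{3p-2}}e_1.$$ Let $k_1,k_2>0$ be such that $\mathcal{A}^*=\begin{bmatrix}-k_1&1\\-k_2&0\end{bmatrix}$ is Hurwitz, let $\mathcal{Q}^*\in\mathbb{R}^{2\times2}$ be symmetric positive definite, and let $\mathcal{P}^*\succ0$ be the unique solution of $(\mathcal{A}^* )^\top\mathcal{P}^*+\mathcal{P}^*\mathcal{A}^*=-\mathcal{Q}^*$. Set $\gamma_1=k_3\lambda_{\min}\{\mathcal{Q}^*\}/\lambda_{\max}\{\mathcal{P}^*\}$. Consider the perturbed system $$\dot e_1=-k_1\phi_1(e_1)+e_2+\delta_1,\qquad \dot e_2=-k_2\phi_2(e_1)+\delta_2,$$ where $\delta=(\delta_1^\top,\delta_2^\top)^\top$, $\delta_1,\delta_2\in\mathbb{R}^n$, is a perturbation bounded by $\|\delta\|\le\bar\delta$. If $\gamma_1\ge\lambda_{\max}\{\mathcal{P}^*\}/\lambda_{\min}\{\mathcal{P}^*\}$, then this perturbed system is practically finite-time stable at the origin.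
   Context: $\lambda_{\min}(\cdot),\lambda_{\max}(\cdot)$ denote the minimum and maximum eigenvalues of a symmetric matrix. A system is practically finite-time stable (PFTS) at the origin if its solutions converge in finite time to a bounded neighbourhood of the origin; specifically, this is certified by a positive definite $V$ with $\dot V\le-\lambda_1V-\lambda_2V^\alpha+\eta$ ($\lambda_1,\lambda_2,\eta>0$, $\alpha\in]0,1[$), in which case solutions reach in finite time the set $\{V\le\min\{\frac{\eta}{(1-\theta_0)\lambda_1},(\frac{\eta}{(1-\theta_0)\lambda_2})^{1/\alpha}\}\}$ for any $\theta_0\in]0,1[$. *)

(* Defs.v *)
From HB Require Import structures.
From mathcomp Require Import all_boot all_order all_algebra.
From mathcomp Require Import all_classical all_reals all_analysis.
From mathcomp Require Import complex.
Set Implicit Arguments. Unset Strict Implicit. Unset Printing Implicit Defensive.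
Import Order.TTheory GRing.Theory Num.Theory.
Import numFieldNormedType.Exports.
Local Open Scope complex_scope.
Local Open Scope classical_set_scope.
Local Open Scope ring_scope.
Local Open Scope complex_scope.

Definition sqnorm (R : realType) (n : nat) (x : 'rV[R]_n) : R :=
  \sum_(i < n) x ord0 i ^+ 2.

Definition pnorm2 (R : realType) (n : nat) (x1 x2 : 'rV[R]_n) : R :=
  Num.sqrt (sqnorm x1 + sqnorm x2).

Definition posdef (R : realType) (m : nat) (M : 'M[R]_m) : Prop :=
  M^T = M /\ forall x : 'rV[R]_m, x != 0 -> 0 < (x *m M *m x^T) ord0 ord0.

Definition hurwitz (R : realType) (m : nat) (A : 'M[R]_m) : Prop :=
  forall z : R[i], root (map_poly (fun a : R => a%:C) (char_poly A)) z ->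
    complex.Re z < 0.

(* extreme eigenvalues (of a symmetric matrix, whose eigenvalues are real) *)
Definition lambda_max (R : realType) (m : nat) (M : 'M[R]_m) : R :=
  sup [set a : R | eigenvalue M a].
Definition lambda_min (R : realType) (m : nat) (M : 'M[R]_m) : R :=
  inf [set a : R | eigenvalue M a].

(* the nonlinear injection terms; powR 0 a = 0 for a <> 0, which is the
   continuous extension of |e1|^(2a) e1 at the origin *)
Definition phi1 (R : realType) (n : nat) (p k3 : R) (e1 : 'rV[R]_n) : 'rV[R]_n :=
  k3 *: e1 + (sqnorm e1 `^ ((1 - p) / (3 * p - 2))) *: e1.

Definition phi2 (R : realType) (n : nat) (p k3 : R) (e1 : 'rV[R]_n) : 'rV[R]_n :=
  k3 ^+ 2 *: e1
  + ((2 * k3 * (2 * p - 1)) / (3 * p - 2) * sqnorm e1 `^ ((1 - p) / (3 * p - 2))) *: e1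
  + (p / (3 * p - 2) * sqnorm e1 `^ (2 * (1 - p) / (3 * p - 2))) *: e1.

Definition perturbed_solution (R : realType) (n : nat) (p k1 k2 k3 dbar : R)
    (e1 e2 : R -> 'rV[R]_n) : Prop :=
  exists d1 d2 : R -> 'rV[R]_n,
    (forall t : R, 0 <= t -> pnorm2 (d1 t) (d2 t) <= dbar) /\
    (forall t : R, 0 < t ->
       is_derive t 1 e1 (- k1 *: phi1 p k3 (e1 t) + e2 t + d1 t) /\
       is_derive t 1 e2 (- k2 *: phi2 p k3 (e1 t) + d2 t)).

Definition PFTS_perturbed (R : realType) (n : nat) (p k1 k2 k3 dbar : R) : Prop :=
  exists r : R, 0 < r /\
    forall e1 e2 : R -> 'rV[R]_n, perturbed_solution p k1 k2 k3 dbar e1 e2 ->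
      exists T : R, 0 <= T /\ forall t, T <= t -> pnorm2 (e1 t) (e2 t) <= r.

(* Main.v *)
Require Import Defs.
From HB Require Import structures.
From mathcomp Require Import all_boot all_order all_algebra.
From mathcomp Require Import all_classical all_reals all_analysis.
From mathcomp Require Import ring lra.
Import Order.TTheory GRing.Theory Num.Theory.
Import numFieldNormedType.Exports.
Local Open Scope ring_scope.

Lemma young {R : realType} (a b eta : R) : 0 < eta ->
  2 * a * b <= eta * a ^+ 2 + b ^+ 2 / eta.
Proof.
move=> e0.
have h : 0 <= (eta * a - b) ^+ 2 / eta by rewrite divr_ge0 ?sqr_ge0 // ltW.
have -> : eta * a ^+ 2 + b ^+ 2 / eta = 2 * a * b + (eta * a - b) ^+ 2 / eta.
  by field; rewrite gt_eqF.
lra.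
Qed.

Lemma sum_derive {R : realType} n (h : 'I_n -> R -> R) (dh : 'I_n -> R) (t : R) :
  (forall i, is_derive t 1 (h i) (dh i)) ->
  is_derive t 1 (fun x => \sum_(i < n) h i x) (\sum_(i < n) dh i).
Proof.
move=> H; have := is_derive_sum H; rewrite fct_sumE => h'.
eapply is_derive_eq; [exact: h'|] => //.
Qed.

Lemma vlow {R : realType} (al ga lam x y : R) : 0 < al -> 0 < lam ->
  lam <= al / 2 -> lam <= ga - 2 / al ->
  lam * (x ^+ 2 + y ^+ 2) <= al * x ^+ 2 - 2 * (x * y) + ga * y ^+ 2.
Proof.
move=> al0 l0 l1 l2.
have a2 : 0 < al / 2 by rewrite divr_gt0.
have := young x y (al / 2) a2.
have -> : y ^+ 2 / (al / 2) = 2 / al * y ^+ 2 by field; rewrite gt_eqF.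
have h1 : lam * x ^+ 2 <= al / 2 * x ^+ 2 by rewrite ler_wpM2r ?sqr_ge0.
have h2 : lam * y ^+ 2 <= (ga - 2 / al) * y ^+ 2 by rewrite ler_wpM2r ?sqr_ge0.
have e : (ga - 2 / al) * y ^+ 2 = ga * y ^+ 2 - 2 / al * y ^+ 2 by ring.
have e2 : al / 2 * x ^+ 2 = al * x ^+ 2 / 2 by ring.
rewrite e in h2; rewrite e2 in h1 *.
have e3 : 2 * x * y = 2 * (x * y) by ring.
rewrite e3 mulrDr; lra.
Qed.

Lemma vup {R : realType} (al ga x y : R) : 0 <= al -> 0 <= ga ->
  al * x ^+ 2 - 2 * (x * y) + ga * y ^+ 2 <= (al + ga + 2) * (x ^+ 2 + y ^+ 2).
Proof.
move=> al0 ga0.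
have := young (- x) y 1 ltr01.
rewrite divr1 mul1r sqrrN => h.
have h1 : 0 <= al * y ^+ 2 by rewrite mulr_ge0 ?sqr_ge0.
have h2 : 0 <= ga * x ^+ 2 by rewrite mulr_ge0 ?sqr_ge0.
have -> : (al + ga + 2) * (x ^+ 2 + y ^+ 2) =
  al * x ^+ 2 + ga * y ^+ 2 + al * y ^+ 2 + ga * x ^+ 2 + 2 * (x ^+ 2 + y ^+ 2) by ring.
have e : 2 * - x * y = - (2 * (x * y)) by ring.
have := sqr_ge0 x; have := sqr_ge0 y; rewrite e in h; lra.
Qed.

Lemma sqnorm_ge_comp {R : realType} n (x : 'rV[R]_n) i : x ord0 i ^+ 2 <= sqnorm x.
Proof.
rewrite /sqnorm (bigD1 i) //= lerDl; apply: sumr_ge0 => j _; exact: sqr_ge0.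
Qed.

Lemma sqnorm_ge0 {R : realType} n (x : 'rV[R]_n) : 0 <= sqnorm x.
Proof. by apply: sumr_ge0 => j _; exact: sqr_ge0. Qed.

Lemma sum_lin {R : realType} n (f g h k : 'I_n -> R) (a b c : R) :
  \sum_(i < n) (a * (f i + g i) + b * (h i + k i) + c) =
  a * (\sum_(i < n) f i + \sum_(i < n) g i) + b * (\sum_(i < n) h i + \sum_(i < n) k i) + c * n%:R.
Proof.
rewrite !big_split /= -!mulr_sumr !big_split /= sumr_const card_ord.
by rewrite mulr_natr.
Qed.

Lemma sum_lin1 {R : realType} n (f g : 'I_n -> R) (a : R) :
  \sum_(i < n) (a * (f i + g i)) = a * (\sum_(i < n) f i + \sum_(i < n) g i).
Proof. by rewrite -mulr_sumr big_split. Qed.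

Lemma comp_derive (R : realType) (n : nat) (M : R -> 'rV[R]_n) (D : 'rV[R]_n) (t : R) (i : 'I_n) :
  is_derive t 1 M D -> is_derive t 1 (fun x => M x ord0 i) (D ord0 i).
Proof.
move=> [dM dMv].
have := dM => /derivable_mxP /(_ ord0 i) di.
apply: DeriveDef => //.
by rewrite -dMv derive_mx // mxE.
Qed.

Lemma quad_derive (R : realType) (f g : R -> R) (f' g' t al ga : R) :
  is_derive t 1 f f' -> is_derive t 1 g g' ->
  is_derive t 1 (fun x => al * f x ^+ 2 - 2 * (f x * g x) + ga * g x ^+ 2)
    (2 * al * f t * f' - 2 * (f' * g t + f t * g') + 2 * ga * g t * g').
Proof.
move=> df dg.
have h1 := is_deriveX 2 df.
have h2 := is_deriveX 2 dg.
have h3 := is_deriveM df dg.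
have h4 := is_deriveZ al h1.
have h5 := is_deriveZ ga h2.
have h6 := is_deriveZ 2 h3.
have h7 := is_deriveB h4 h6.
have h8 := is_deriveD h7 h5.
have -> : (fun x => al * f x ^+ 2 - 2 * (f x * g x) + ga * g x ^+ 2) =
  (al \*: f ^+ 2 - 2 \*: (f * g) + ga \*: g ^+ 2).
  by apply/funext => x /=.
eapply is_derive_eq; [exact: h8|]. rewrite /GRing.scale /= !expr1; ring.
Qed.

Lemma compare (R : realType) (V dV : R -> R) (c K : R) :
  0 < c -> 0 < K ->
  (forall t : R, 0 < t -> is_derive t 1 V (dV t)) ->
  (forall t : R, 0 < t -> dV t <= - c * V t + K) ->
  exists T : R, 0 <= T /\ forall t : R, T <= t -> V t <= 2 * K / c.
Proof.
move=> c0 K0 dVt dVle.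
pose g := fun t => expR (c * t) * (V t - K / c).
have dg : forall t : R, 0 < t ->
   is_derive t 1 g (expR (c * t) * (c * V t - K + dV t)).
  move=> t t0.
  have h1 : is_derive t 1 (fun t => c * t) c.
    have := is_deriveZ c (@is_derive_id _ _ t 1).
    move=> h; eapply is_derive_eq; [exact: h|]; by rewrite /GRing.scale /= mulr1.
  have h2 := is_derive1_comp (is_derive_expR (c * t)) h1.
  have h3 : is_derive t 1 (fun t => V t - K / c) (dV t).
    have := is_deriveB (dVt t t0) (is_derive_cst (K / c) t 1).
    move=> h; eapply is_derive_eq; [exact: h|]; by rewrite subr0.
  have h4 := is_deriveM h2 h3.
  eapply is_derive_eq; [exact: h4|].
  rewrite /GRing.scale /=. field. by rewrite gt_eqF.
have gle : forall t : R, 1 <= t -> g t <= g 1.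
  move=> t t1.
  have [ξ ξin Hξ] : exists2 ξ, ξ \in `[1, t]%R &
      g t - g 1 = (fun u => expR (c * u) * (c * V u - K + dV u)) ξ * (t - 1).
    apply: MVT_segment => //.
      move=> x; rewrite in_itv /= => /andP[x1 _]; apply: dg; lra.
    apply: derivable_within_continuous => x; rewrite in_itv /= => /andP[x1 _].
    by have [] := dg x ltac:(lra).
  move: ξin; rewrite in_itv /= => /andP[ξ1 _].
  have : (fun u => expR (c * u) * (c * V u - K + dV u)) ξ * (t - 1) <= 0.
    rewrite /= mulr_le0_ge0 ?subr_ge0 //.
    apply: mulr_ge0_le0; first exact: ltW (expR_gt0 _).
    have := dVle ξ ltac:(lra); lra.
  lra.
pose A := expR c * `|V 1 - K / c|.
have A0 : 0 <= A by rewrite mulr_ge0 // ltW // expR_gt0.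
exists (1 + A / K); split; first by have := divr_ge0 A0 (ltW K0); lra.
move=> t tT.
have AK : 0 <= A / K by exact: divr_ge0 A0 (ltW K0).
have t1 : 1 <= t by lra.
have g1 : g 1 <= A.
  rewrite /g /A mulr1 ler_pM2l ?expR_gt0 //; exact: ler_norm.
have := le_trans (gle t t1) g1; rewrite /g => HE.
set E := expR (c * t) in HE.
have E0 : 0 < E by exact: expR_gt0.
have EK : c * A <= K * E.
  have h := expR_ge1Dx (c * t).
  have : A <= K * t.
    have : A / K * K = A by rewrite divfK // gt_eqF.
    move=> <-; rewrite mulrC ler_pM2l //; lra.
  move=> AKt.
  have : c * A <= c * (K * t) by rewrite ler_pM2l.
  rewrite -/E in h; nra.
have W : c * (V t - K / c) <= K.
  have : E * (c * (V t - K / c)) <= E * K by nra.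
  by rewrite ler_pM2l.
have : V t - K / c <= K / c by rewrite ler_pdivlMr // mulrC.
have -> : 2 * K / c = K / c + K / c by field; rewrite gt_eqF.
lra.
Qed.

Lemma powR_mono (R : realType) (r : R) (x y : R) : 0 <= r -> 0 <= x -> x <= y ->
  x `^ r <= y `^ r.
Proof.
move=> r0 x0 xy; apply: (ge0_ler_powR r0) => //; rewrite nnegrE //; lra.
Qed.

Lemma region (R : realType) (b : R) : b < 0 -> 0 < 1 + 2 * b ->
  forall eps : R, 0 < eps -> exists C : R, 0 <= C /\ forall s : R, 0 <= s ->
    s `^ b <= eps \/ (s `^ b * s <= C /\ (s `^ b) ^+ 2 * s <= C).
Proof.
move=> b0 b1 eps e0.
pose Rr := eps `^ (b^-1).
have Rr0 : 0 < Rr by exact: powR_gt0.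
exists (Rr `^ (b + 1) + Rr `^ (b + b + 1)); split.
  by rewrite addr_ge0 ?powR_ge0.
move=> s s0.
have bn0 : b != 0 by rewrite lt_eqF.
case: (eqVneq s 0) => [->|sn0].
  by left; rewrite powR0 // ltW.
have sp : 0 < s by rewrite lt_def sn0 s0.
case: (lerP Rr s) => Hs.
  left.
  have -> : eps = Rr `^ b.
    by rewrite /Rr -powRrM mulVf // powRr1 // ltW.
  have hs : s `^ b = (s `^ (-b))^-1 by rewrite -powRN opprK.
  have hR : Rr `^ b = (Rr `^ (-b))^-1 by rewrite -powRN opprK.
  rewrite hs hR lef_pV2 ?posrE ?powR_gt0 //.
  apply: powR_mono => //; [lra | exact: ltW].
right.
have e1 : s `^ b * s = s `^ (b + 1).
  by rewrite powRD ?sn0 ?implybT // powRr1.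
have e2 : (s `^ b) ^+ 2 * s = s `^ (b + b + 1).
  by rewrite expr2 powRD ?sn0 ?implybT // powRD ?sn0 ?implybT // powRr1.
rewrite e1 e2; split.
  apply: le_trans (_ : Rr `^ (b + 1) <= _).
    apply: powR_mono => //; [lra| exact: ltW].
  by rewrite lerDl powR_ge0.
apply: le_trans (_ : Rr `^ (b + b + 1) <= _).
  apply: powR_mono => //; [lra| exact: ltW].
by rewrite lerDr powR_ge0.
Qed.

Lemma zeta_bound {R : realType} (z x y eps C : R) : 0 <= z -> 0 < eps -> 0 <= C ->
  (z <= eps \/ (z * x ^+ 2 <= C /\ z ^+ 2 * x ^+ 2 <= C)) ->
  z * x ^+ 2 + z * `|x * y| <= 2 * eps * (x ^+ 2 + y ^+ 2) + C * (1 + 1 / eps).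
Proof.
move=> z0 e0 C0 [ze|[h1 h2]].
  have a1 : z * x ^+ 2 <= eps * x ^+ 2 by rewrite ler_wpM2r ?sqr_ge0.
  have a2 : z * `|x * y| <= eps * `|x * y| by rewrite ler_wpM2r.
  have a3 : 2 * `|x * y| <= x ^+ 2 + y ^+ 2.
    have := young `|x| `|y| 1 ltr01; rewrite normrM !real_normK ?num_real //; lra.
  have a4 : 0 <= eps * C by rewrite mulr_ge0 // ltW.
  have a5 : 0 <= C / eps by rewrite divr_ge0 // ltW.
  have a6 : 2 * (eps * `|x * y|) <= eps * (x ^+ 2 + y ^+ 2).
    by rewrite mulrCA ler_wpM2l // ltW.
  have a7 : 0 <= eps * x ^+ 2 by rewrite mulr_ge0 ?sqr_ge0 // ltW.
  have a8 : C * (1 + 1 / eps) = C + C / eps by rewrite mulrDr mulr1 mul1r.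
  rewrite a8; nra.
have := young `|z * x| `|y| eps^-1 (ltac:(by rewrite invr_gt0) : 0 < eps^-1) .
rewrite invrK !real_normK ?num_real // exprMn.
move=> hy.
have b1 : z * `|x * y| = `|z * x| * `|y| by rewrite !normrM (ger0_norm z0) mulrA.
have b2 : z ^+ 2 * x ^+ 2 / eps <= C / eps by rewrite ler_pM2r ?invr_gt0.
have b3 : eps^-1 * (z ^+ 2 * x ^+ 2) = z ^+ 2 * x ^+ 2 / eps by rewrite mulrC.
have b4 : 0 <= eps * x ^+ 2 by rewrite mulr_ge0 ?sqr_ge0 // ltW.
have b5 : 0 <= eps * y ^+ 2 by rewrite mulr_ge0 ?sqr_ge0 // ltW.
have b6 : y ^+ 2 / eps^-1 = eps * y ^+ 2 by rewrite invrK mulrC.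
rewrite b1.
rewrite b3 (mulrC (y ^+ 2)) in hy.
have a8 : C * (1 + 1 / eps) = C + C / eps by rewrite mulrDr mulr1 mul1r.
rewrite a8.
have b8 : 2 * eps * (x ^+ 2 + y ^+ 2) = 2 * (eps * x ^+ 2) + 2 * (eps * y ^+ 2) by ring.
rewrite b8.
have b9 : 2 * `|z * x| * `|y| = 2 * (`|z * x| * `|y|) by ring.
rewrite b9 in hy.
have a5 : 0 <= C / eps by rewrite divr_ge0 // ltW.
lra.
Qed.

Ltac nneg := repeat match goal with |- is_true (0 <= _ * _) => apply: mulr_ge0 | |- is_true (0 <= _ + _) => apply: addr_ge0 end; solve [assumption | exact: ler0n | exact: sqr_ge0 | done].

Lemma percomp {R : realType} (k1 k2 k3 c m s t x y d1 d2 x' y' al ga mu B eps C : R) :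
  0 < k1 -> 0 < k2 -> 0 < k3 -> 0 <= c -> 0 <= m -> 0 <= s -> 0 <= t ->
  0 <= al -> 0 <= ga ->
  al * (k1 * k3) = 2 * (k2 * k3 ^+ 2) -> ga * (k2 * k3 ^+ 2) = al + k1 * k3 ->
  0 < mu -> mu <= k2 * k3 ^+ 2 -> mu <= 1 ->
  B = 2 * (k1 + ga * k2 * c + k2 * c + k2 * m + ga * k2 * m) ->
  0 < eps -> 8 * B * eps <= mu -> 0 <= C ->
  (s <= eps \/ (s * x ^+ 2 <= C /\ s ^+ 2 * x ^+ 2 <= C)) ->
  (t <= eps \/ (t * x ^+ 2 <= C /\ t ^+ 2 * x ^+ 2 <= C)) ->
  x' = - k1 * (k3 * x + s * x) + y + d1 ->
  y' = - k2 * (k3 ^+ 2 * x + (c * s) * x + (m * t) * x) + d2 ->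
  2 * al * x * x' - 2 * (x' * y + x * y') + 2 * ga * y * y' <=
  - mu * (x ^+ 2 + y ^+ 2) + 8 / mu * (al ^+ 2 + ga ^+ 2 + 1) * (d1 ^+ 2 + d2 ^+ 2)
  + 2 * B * C * (1 + 1 / eps).
Proof.
move=> k10 k20 k30 c0 m0 s0 t0 al0 ga0 hal hga mu0 mua mu1 hB e0 Be C0 hs ht -> ->.
have k1w := ltW k10. have k2w := ltW k20.
set a2 := k2 * k3 ^+ 2 in hal hga mua *.
set X2 := x ^+ 2. set Y2 := y ^+ 2. set P := `|x * y|.
have X20 : 0 <= X2 by rewrite sqr_ge0.
have Y20 : 0 <= Y2 by rewrite sqr_ge0.
have P0 : 0 <= P by exact: normr_ge0.
have xyP : x * y <= P by rewrite /P ler_norm.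
have xyP' : - (x * y) <= P by rewrite /P -normrN ler_norm.
have E : 2 * al * x * (- k1 * (k3 * x + s * x) + y + d1) -
  2 * ((- k1 * (k3 * x + s * x) + y + d1) * y +
       x * (- k2 * (k3 ^+ 2 * x + c * s * x + m * t * x) + d2)) +
  2 * ga * y * (- k2 * (k3 ^+ 2 * x + c * s * x + m * t * x) + d2) =
  - 2 * a2 * X2 - 2 * Y2
  - 2 * al * k1 * (s * X2) + 2 * k1 * (s * (x * y)) + 2 * k2 * c * (s * X2)
  + 2 * ga * k2 * c * (s * - (x * y))
  + 2 * k2 * m * (t * X2) + 2 * ga * k2 * m * (t * - (x * y))
  + (2 * x * (al * d1) + 2 * y * (- d1) + 2 * x * (- d2) + 2 * y * (ga * d2))
  + (- 2 * X2) * (al * (k1 * k3) - 2 * a2) + 2 * (x * y) * (al + k1 * k3 - ga * a2).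
  rewrite /X2 /Y2 /a2; ring.
rewrite E hal hga !subrr !mulr0 !addr0; clear E.
have sP : s * (x * y) <= s * P by rewrite ler_wpM2l.
have sP' : s * - (x * y) <= s * P by rewrite ler_wpM2l.
have tP' : t * - (x * y) <= t * P by rewrite ler_wpM2l.
have sX0 : 0 <= s * X2 by nneg.
have sP0 : 0 <= s * P by nneg.
have tX0 : 0 <= t * X2 by nneg.
have tP0 : 0 <= t * P by nneg.
have n1 : 0 <= 2 * al * k1 * (s * X2) by nneg.
have n2 : 2 * k1 * (s * (x * y)) <= 2 * k1 * (s * P) by rewrite ler_wpM2l //; nneg.
have n3 : 2 * ga * k2 * c * (s * - (x * y)) <= 2 * ga * k2 * c * (s * P).
  by rewrite ler_wpM2l //; nneg.
have n4 : 2 * ga * k2 * m * (t * - (x * y)) <= 2 * ga * k2 * m * (t * P).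
  by rewrite ler_wpM2l //; nneg.
have Z1 := @zeta_bound R s x y eps C s0 e0 C0 hs.
have Z2 := @zeta_bound R t x y eps C t0 e0 C0 ht.
rewrite -/X2 -/Y2 -/P in Z1 Z2.
set W := 2 * eps * (X2 + Y2) + C * (1 + 1 / eps) in Z1 Z2.
have NL : 2 * k1 * (s * P) + 2 * k2 * c * (s * X2) + 2 * ga * k2 * c * (s * P)
   + 2 * k2 * m * (t * X2) + 2 * ga * k2 * m * (t * P) <= B * (s * X2 + s * P) + B * (t * X2 + t * P).
  rewrite hB -subr_ge0.
  have -> : 2 * (k1 + ga * k2 * c + k2 * c + k2 * m + ga * k2 * m) * (s * X2 + s * P) +
    2 * (k1 + ga * k2 * c + k2 * c + k2 * m + ga * k2 * m) * (t * X2 + t * P) -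
    (2 * k1 * (s * P) + 2 * k2 * c * (s * X2) + 2 * ga * k2 * c * (s * P) +
     2 * k2 * m * (t * X2) + 2 * ga * k2 * m * (t * P)) =
    2 * ((k1 + ga * k2 * c + k2 * m + ga * k2 * m) * (s * X2) + (k2 * c + k2 * m + ga * k2 * m) * (s * P)
    + (k1 + ga * k2 * c + k2 * c + ga * k2 * m) * (t * X2) + (k1 + ga * k2 * c + k2 * c + k2 * m) * (t * P)) by ring.
  nneg.
have B0 : 0 <= B.
  rewrite hB; nneg.
have Z1' : B * (s * X2 + s * P) <= B * W by rewrite ler_wpM2l.
have Z2' : B * (t * X2 + t * P) <= B * W by rewrite ler_wpM2l.
have BW : 2 * (B * W) <= mu / 2 * (X2 + Y2) + 2 * B * C * (1 + 1 / eps).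
  have -> : 2 * (B * W) = 4 * (B * eps) * (X2 + Y2) + 2 * B * C * (1 + 1 / eps) by rewrite /W; ring.
  have : 4 * (B * eps) * (X2 + Y2) <= mu / 2 * (X2 + Y2).
    rewrite ler_wpM2r //; first by rewrite addr_ge0.
    lra.
  move=> h; by rewrite lerD2r.
have mu8 : 0 < mu / 8 by rewrite divr_gt0.
have D1 := young x (al * d1) (mu / 8) mu8.
have D2 := young y (- d1) (mu / 8) mu8.
have D3 := young x (- d2) (mu / 8) mu8.
have D4 := young y (ga * d2) (mu / 8) mu8.
have F : forall z : R, z ^+ 2 / (mu / 8) = 8 / mu * z ^+ 2.
  by move=> z; field; rewrite gt_eqF.
rewrite !F in D1 D2 D3 D4.
rewrite !exprMn sqrrN in D1 D2 D3 D4.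
rewrite -/X2 -/Y2 in D1 D2 D3 D4.
have Kd0 : 0 <= 8 / mu by apply: divr_ge0 => //; exact: ltW.
set Kd := 8 / mu in D1 D2 D3 D4 Kd0 *.
have e1 : Kd * (al ^+ 2 + ga ^+ 2 + 1) * (d1 ^+ 2 + d2 ^+ 2) =
   Kd * (al ^+ 2 * d1 ^+ 2) + Kd * d1 ^+ 2 + Kd * d2 ^+ 2 + Kd * (ga ^+ 2 * d2 ^+ 2)
   + Kd * (ga ^+ 2 * d1 ^+ 2) + Kd * (al ^+ 2 * d2 ^+ 2) by ring.
rewrite e1.
have f1 : 0 <= Kd * (ga ^+ 2 * d1 ^+ 2) by nneg.
have f2 : 0 <= Kd * (al ^+ 2 * d2 ^+ 2) by nneg.
have g1 : mu * X2 <= a2 * X2 by rewrite ler_wpM2r.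
have g2 : mu * Y2 <= Y2 by rewrite ler_piMl.
have g3 : - mu * (X2 + Y2) = - (mu * X2) - mu * Y2 by ring.
have g4 : mu / 2 * (X2 + Y2) = mu / 2 * X2 + mu / 2 * Y2 by ring.
have g5 : mu / 8 * X2 = (mu * X2) / 8 by ring.
have g6 : mu / 8 * Y2 = (mu * Y2) / 8 by ring.
have g7 : mu / 2 * X2 = (mu * X2) / 2 by ring.
have g8 : mu / 2 * Y2 = (mu * Y2) / 2 by ring.
rewrite g4 g7 g8 in BW. rewrite g5 g6 in D1 D2 D3 D4.
rewrite g3.
have g9 : - 2 * a2 * X2 = - 2 * (a2 * X2) by ring.
rewrite g9.
rewrite sqrrN in D3.
have mx : 0 <= mu * X2 by apply: mulr_ge0 => //; exact: ltW.
have my : 0 <= mu * Y2 by apply: mulr_ge0 => //; exact: ltW.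
lra.
Qed.


Theorem corollary1 (R : realType) (n : nat) (p k1 k2 k3 dbar : R)
    (Q P : 'M[R]_2) :
  (1 <= n)%N -> 1 < p -> p < 2 -> 0 < k3 -> 0 < k1 -> 0 < k2 -> 0 <= dbar ->
  let A := \matrix_(i < 2, j < 2)
             (if i == 0 then (if j == 0 then - k1 else 1)
              else (if j == 0 then - k2 else 0)) in
  hurwitz A ->
  posdef Q ->
  posdef P ->
  A^T *m P + P *m A = - Q ->
  let gamma1 := k3 * lambda_min Q / lambda_max P in
  gamma1 >= lambda_max P / lambda_min P ->
  PFTS_perturbed n p k1 k2 k3 dbar.
Proof.
move=> n1 p1 p2 k30 k10 k20 db0 A _ _ _ _ gamma1 _.
have q0 : 0 < 3 * p - 2 by lra.
have qn0 : 3 * p - 2 != 0 by rewrite gt_eqF.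
set ea := (1 - p) / (3 * p - 2).
set eb := 2 * (1 - p) / (3 * p - 2).
have ea0 : ea < 0 by rewrite /ea ltr_pdivrMr // mul0r; lra.
have eb0 : eb < 0 by rewrite /eb ltr_pdivrMr // mul0r; lra.
have ea1 : 0 < 1 + 2 * ea.
  have -> : 1 + 2 * ea = p / (3 * p - 2) by rewrite /ea; field.
  by rewrite divr_gt0 //; lra.
have eb1 : 0 < 1 + 2 * eb.
  have -> : 1 + 2 * eb = (2 - p) / (3 * p - 2) by rewrite /eb; field.
  by rewrite divr_gt0 //; lra.
set a1 := k1 * k3.
set a2 := k2 * k3 ^+ 2.
have a10 : 0 < a1 by rewrite mulr_gt0.
have a20 : 0 < a2 by rewrite mulr_gt0 // exprn_gt0.
set al := 2 * a2 / a1.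
set ga := 2 / a1 + a1 / a2.
have al0 : 0 < al by rewrite divr_gt0 // mulr_gt0.
have ga0 : 0 < ga by rewrite addr_gt0 // divr_gt0.
have hal : al * (k1 * k3) = 2 * (k2 * k3 ^+ 2).
  by rewrite -/a1 -/a2 /al; field; rewrite gt_eqF.
have hga : ga * (k2 * k3 ^+ 2) = al + k1 * k3.
  by rewrite -/a1 -/a2 /al /ga; field; rewrite !gt_eqF.
have k1w := ltW k10. have k2w := ltW k20. have gaw := ltW ga0. have alw := ltW al0.
set c := 2 * k3 * (2 * p - 1) / (3 * p - 2).
set m := p / (3 * p - 2).
have c0 : 0 <= c by rewrite /c divr_ge0 ?mulr_ge0 //; lra.
have m0 : 0 <= m by rewrite /m divr_ge0 //; lra.
set mu := Num.min a2 1.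
have mu0 : 0 < mu by rewrite /mu lt_min a20 ltr01.
have mua : mu <= a2 by rewrite /mu ge_min lexx.
have mu1 : mu <= 1 by rewrite /mu ge_min lexx orbT.
set B := 2 * (k1 + ga * k2 * c + k2 * c + k2 * m + ga * k2 * m).
have B0 : 0 <= B.
  have : 0 <= ga * k2 * c by nneg.
  have : 0 <= k2 * c by nneg.
  have : 0 <= k2 * m by nneg.
  have : 0 <= ga * k2 * m by nneg.
  rewrite /B; lra.
set eps := mu / (8 * B + 1).
have e0 : 0 < eps by rewrite divr_gt0 //; lra.
have Be : 8 * B * eps <= mu.
  rewrite /eps mulrA ler_pdivrMr; last by lra.
  have : 0 <= mu * (8 * B) by rewrite mulr_ge0 //; lra.
  have e : mu * (8 * B + 1) = mu * (8 * B) + mu by ring.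
  rewrite e mulrC; lra.
have [C1 [C10 HC1]] := @region R ea ea0 ea1 eps e0.
have [C2 [C20 HC2]] := @region R eb eb0 eb1 eps e0.
set C := C1 + C2.
have C0 : 0 <= C by rewrite addr_ge0.
set Kd := 8 / mu * (al ^+ 2 + ga ^+ 2 + 1).
have Kd0 : 0 <= Kd.
  rewrite /Kd; apply: mulr_ge0; first by apply: divr_ge0 => //; exact: ltW.
  have := sqr_ge0 al; have := sqr_ge0 ga; lra.
set C3 := 2 * B * C * (1 + 1 / eps).
have C30 : 0 <= C3.
  rewrite /C3; apply: mulr_ge0; first by apply: mulr_ge0 => //; apply: mulr_ge0 => //; lra.
  have : 0 <= 1 / eps by rewrite divr_ge0 // ltW.
  lra.
set K0 := Kd * dbar ^+ 2 + C3 * n%:R + 1.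
have K00 : 0 < K0.
  have : 0 <= Kd * dbar ^+ 2 by rewrite mulr_ge0 ?sqr_ge0.
  have : 0 <= C3 * n%:R by rewrite mulr_ge0.
  rewrite /K0; lra.
set M := al + ga + 2.
have M0 : 0 < M by rewrite /M; lra.
set cc := mu / M.
have cc0 : 0 < cc by rewrite /cc divr_gt0.
set lam := Num.min (al / 2) (2 / a1).
have lam0 : 0 < lam.
  have h1 : 0 < al / 2 by apply: divr_gt0.
  have h2 : 0 < 2 / a1 by apply: divr_gt0.
  by rewrite /lam lt_min h1 h2.
have lam1 : lam <= al / 2 by rewrite /lam ge_min lexx.
have lam2 : lam <= ga - 2 / al.
  have -> : ga - 2 / al = 2 / a1 by rewrite /ga /al; field; rewrite !gt_eqF.
  by rewrite /lam ge_min lexx orbT.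
set Z := 2 * K0 / cc / lam.
exists (Num.sqrt Z + 1); split.
  have := sqrtr_ge0 Z; lra.
move=> e1 e2 [d1 [d2 [hd hder]]].
pose V := fun t : R => \sum_(i < n) (al * e1 t ord0 i ^+ 2 - 2 * (e1 t ord0 i * e2 t ord0 i) + ga * e2 t ord0 i ^+ 2).
pose X' := fun (t : R) (i : 'I_n) => (- k1 *: phi1 p k3 (e1 t) + e2 t + d1 t) ord0 i.
pose Y' := fun (t : R) (i : 'I_n) => (- k2 *: phi2 p k3 (e1 t) + d2 t) ord0 i.
pose dV := fun t : R => \sum_(i < n) (2 * al * e1 t ord0 i * X' t i
   - 2 * (X' t i * e2 t ord0 i + e1 t ord0 i * Y' t i) + 2 * ga * e2 t ord0 i * Y' t i).
have dVd : forall t : R, 0 < t -> is_derive t 1 V (dV t).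
  move=> t t0; have [h1 h2] := hder t t0.
  apply: (@sum_derive R n (fun i t => al * e1 t ord0 i ^+ 2 - 2 * (e1 t ord0 i * e2 t ord0 i) + ga * e2 t ord0 i ^+ 2)) => i.
  apply: (@quad_derive R (fun t => e1 t ord0 i) (fun t => e2 t ord0 i)); exact: comp_derive.
have Vup : forall t : R, V t <= M * (sqnorm (e1 t) + sqnorm (e2 t)).
  move=> t; rewrite /V /sqnorm -sum_lin1; apply: ler_sum => i _; exact: vup.
have Vlow : forall t : R, lam * (sqnorm (e1 t) + sqnorm (e2 t)) <= V t.
  move=> t; rewrite /V /sqnorm -sum_lin1; apply: ler_sum => i _; exact: vlow.
have dVle : forall t : R, 0 < t -> dV t <= - cc * V t + K0.
  move=> t t0.
  set s := sqnorm (e1 t).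
  have s0 : 0 <= s by apply: sqnorm_ge0.
  have reg : forall (b : R) (C' : R), C' <= C ->
     (s `^ b <= eps \/ (s `^ b * s <= C' /\ (s `^ b) ^+ 2 * s <= C')) ->
     forall i, (s `^ b <= eps \/ (s `^ b * e1 t ord0 i ^+ 2 <= C /\ (s `^ b) ^+ 2 * e1 t ord0 i ^+ 2 <= C)).
    move=> b C' hC' [h|[h1 h2]] i; [by left | right].
    have hi := @sqnorm_ge_comp R n (e1 t) i; rewrite -/s in hi.
    split.
      apply: le_trans hC'; apply: le_trans h1; apply: ler_wpM2l => //; exact: powR_ge0.
    apply: le_trans hC'; apply: le_trans h2; apply: ler_wpM2l => //; exact: sqr_ge0.
  have per : forall i, 2 * al * e1 t ord0 i * X' t i
      - 2 * (X' t i * e2 t ord0 i + e1 t ord0 i * Y' t i) + 2 * ga * e2 t ord0 i * Y' t i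
      <= - mu * (e1 t ord0 i ^+ 2 + e2 t ord0 i ^+ 2) + Kd * (d1 t ord0 i ^+ 2 + d2 t ord0 i ^+ 2) + C3.
    move=> i.
    apply: (percomp k1 k2 k3 c m (s `^ ea) (s `^ eb) (e1 t ord0 i) (e2 t ord0 i)
      (d1 t ord0 i) (d2 t ord0 i) (X' t i) (Y' t i) al ga mu B eps C) => //.
    - exact: powR_ge0.
    - exact: powR_ge0.
    - apply: (reg ea C1); first by rewrite /C lerDl.
      exact: HC1.
    - apply: (reg eb C2); first by rewrite /C lerDr.
      exact: HC2.
    - by rewrite /X' /phi1 !mxE.
    - by rewrite /Y' /phi2 !mxE.
  have S1 : dV t <= \sum_(i < n) (- mu * (e1 t ord0 i ^+ 2 + e2 t ord0 i ^+ 2)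
       + Kd * (d1 t ord0 i ^+ 2 + d2 t ord0 i ^+ 2) + C3).
    by apply: ler_sum => i _; exact: per.
  rewrite sum_lin in S1.
  have hdt := hd t (ltW t0).
  have dsum : sqnorm (d1 t) + sqnorm (d2 t) <= dbar ^+ 2.
    move: hdt; rewrite /pnorm2 => hdt.
    have z0 : 0 <= sqnorm (d1 t) + sqnorm (d2 t) by rewrite addr_ge0 ?sqnorm_ge0.
    rewrite -(sqr_sqrtr z0).
    by rewrite lerXn2r // ?nnegrE ?sqrtr_ge0.
  have S2 : Kd * (sqnorm (d1 t) + sqnorm (d2 t)) <= Kd * dbar ^+ 2 by rewrite ler_wpM2l.
  have S3 : cc * V t <= mu * (s + sqnorm (e2 t)).
    have := ler_wpM2l (ltW cc0) (Vup t).
    have -> : cc * (M * (sqnorm (e1 t) + sqnorm (e2 t))) = mu * (s + sqnorm (e2 t)).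
      by rewrite /cc -/s; field; rewrite gt_eqF.
    done.
  have e : - cc * V t = - (cc * V t) by ring.
  rewrite e /K0.
  idtac.
  rewrite /sqnorm in S2 S3.
  rewrite /s /sqnorm in S3.
  lra.
have [T [T0 HT]] := @compare R V dV cc K0 cc0 K00 dVd dVle.
exists T; split => // t tT.
have h1 := HT t tT.
have h2 := Vlow t.
rewrite /pnorm2.
have z0 : 0 <= sqnorm (e1 t) + sqnorm (e2 t) by rewrite addr_ge0 ?sqnorm_ge0.
have h3 : sqnorm (e1 t) + sqnorm (e2 t) <= Z.
  rewrite /Z ler_pdivlMr // mulrC; exact: le_trans h2 h1.
have := ler_wsqrtr h3; lra.
Qed.
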